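(* For any constant $\varepsilon\in(0,\eta)$, let $c_\varepsilon=\min\{2\eta-2\varepsilon,1\}$. Then the set $E_{c_\varepsilon}=\{(x_1,\dots,x_n)\in[0,1]^n:\max_{i,j\in\mathcal V}|x_i-x_j|\ge c_\varepsilon\}$ is finite-time robustly reachable from $[0,1]^n$ under both control protocols (C1) and (C3).
   Context: Fix $n\ge3$, $\mathcal V=\{1,\dots,n\}$, confidence thresholds $r_i\in(0,1]$, belief factors $\omega_i\in(0,1)$, $\eta>0$. States $x(t)\in[0,1]^n$. Neighbor set $\mathcal N_i(t)=\{j:|x_j(t)-x_i(t)|\le r_i\}$ (contains $i$), $\Pi_{[0,1]}(y)=\min\{1,\max\{0,y\}\}$, $x_{\rm ave}(t)=\frac1n\sum_ix_i(t)$. Control protocol (C1): $x_i(t+1)=\Pi_{[0,1]}\big(|\mathcal N_i(t)|^{-1}\sum_{j\in\mathcal N_i(t)}x_j(t)+u_i(t)+b_i(t)\big)$. Control protocol (C3): $x_i(t+1)=\Pi_{[0,1]}\big(\omega_ix_{\rm ave}(t)+\frac{1-\omega_i}{|\mathcal N_i(t)|}\sum_{j\in\mathcal N_i(t)}x_j(t)+u_i(t)+b_i(t)\big)$. Here $\delta_i(t)\in(0,\eta)$ is a chosen parameter, $u_i(t)\in[-\eta+\delta_i(t),\eta-\delta_i(t)]$ a chosen control input, $b_i(t)\in[-\delta_i(t),\delta_i(t)]$ an arbitrary uncertainty; $\delta_i(t),u_i(t)$ may depend on $x(0),\dots,x(t)$. A set $S\subseteq[0,1]^n$ is finite-time robustly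 reachable from $[0,1]^n$ under a control protocol if there exist constants $T>0$ and $\varepsilon'\in(0,\eta)$, independent of $x(0)$, such that for every $x(0)\in[0,1]^n$, either $x(0)\in S$, or one can choose $\delta_i(t)\in[\varepsilon',\eta)$ and $u_i(t)\in[-\eta+\delta_i(t),\eta-\delta_i(t)]$ for $i\in\mathcal V$, $0\le t<T$, guaranteeing that for arbitrary $b_i(t)\in[-\delta_i(t),\delta_i(t)]$ there is $t\in[1,T]$ with $x(t)\in S$. *)

(* Defs.v *)
From Stdlib Require Import Reals List.
Import ListNotations.
Open Scope R_scope.

(* A state is a vector indexed by agents 0..n-1 (entries at i >= n are irrelevant). *)
Definition state := nat -> R.

Definition sumR (l : list nat) (x : state) : R :=
  fold_right (fun j acc => x j + acc) 0 l.

Definition nbrs (n : nat) (r : nat -> R) (x : state) (i : nat) : list nat :=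
  filter (fun j => if Rle_dec (Rabs (x j - x i)) (r i) then true else false)
         (seq 0 n).

Definition nbr_avg (n : nat) (r : nat -> R) (x : state) (i : nat) : R :=
  sumR (nbrs n r x i) x / INR (length (nbrs n r x i)).

Definition x_ave (n : nat) (x : state) : R := sumR (seq 0 n) x / INR n.

Definition proj01 (y : R) : R := Rmin 1 (Rmax 0 y).

(* the un-projected, control-free part of the protocols *)
Definition proto_C1 (n : nat) (r : nat -> R) : state -> nat -> R := nbr_avg n r.
Definition proto_C3 (n : nat) (r omega : nat -> R) (x : state) (i : nat) : R :=
  omega i * x_ave n x + (1 - omega i) / INR (length (nbrs n r x i))
                          * sumR (nbrs n r x i) x.

Definition in_cube (n : nat) (x : state) : Prop :=
  forall i, (i < n)%nat -> 0 <= x i <= 1.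

Definition max_diff (n : nat) (x : state) : R :=
  fold_right Rmax 0
    (flat_map (fun i => map (fun j => Rabs (x i - x j)) (seq 0 n)) (seq 0 n)).

Definition E_c (n : nat) (c : R) (x : state) : Prop :=
  in_cube n x /\ max_diff n x >= c.

(* History (newest state first) x(k) :: ... :: x(0), generated by the
   protocol f, control input u (a function of the history), and
   uncertainty sequence b. x(k+1)_i = Pi(f(x(k))_i + u_i(k) + b_i(k)). *)
Fixpoint hist (f : state -> nat -> R) (u : list state -> nat -> R)
  (b : nat -> nat -> R) (x0 : state) (k : nat) : list state :=
  match k with
  | O => [x0]
  | S k' => let h := hist f u b x0 k' in
            (fun i => proj01 (f (hd x0 h) i + u h i + b k' i)) :: h
  end.

Definition traj f u b x0 k : state := hd x0 (hist f u b x0 k).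

(* Finite-time robust reachability of S from [0,1]^n under protocol f.
   delta and u are feedback policies on the full history x(0..t). *)
Definition robustly_reachable (n : nat) (eta : R) (f : state -> nat -> R)
  (S : state -> Prop) : Prop :=
  exists (T : nat) (eps' : R),
    (0 < T)%nat /\ 0 < eps' < eta /\
    forall x0 : state, in_cube n x0 ->
      S x0 \/
      exists delta u : list state -> nat -> R,
        (forall h i, eps' <= delta h i < eta /\
                     - (eta - delta h i) <= u h i <= eta - delta h i) /\
        forall b : nat -> nat -> R,
          (forall t i, (t < T)%nat -> (i < n)%nat ->
             Rabs (b t i) <= delta (hist f u b x0 t) i) ->
          exists t, (1 <= t <= T)%nat /\ S (traj f u b x0 t).

(* Main.v *)
Require Import Defs.
From Stdlib Require Import Reals Lra Lia List Arith.
Import ListNotations.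
Open Scope R_scope.

Ltac rsolve := unfold proj01, Rmin, Rmax in *; repeat (destruct Rle_dec); try split_Rabs; lra.

Definition clamp (c y : R) : R := Rmax (- c) (Rmin c y).

Lemma clamp_bd c y : 0 <= c -> - c <= clamp c y <= c.
Proof. intros; unfold clamp, Rmax, Rmin; repeat destruct Rle_dec; lra. Qed.

Lemma proj01_bd y : 0 <= proj01 y <= 1.
Proof. unfold proj01, Rmin, Rmax; repeat destruct Rle_dec; lra. Qed.

Lemma step_center y D bb d eta :
  0 <= d -> Rabs y <= D -> Rabs bb <= d -> 0 <= eta - d ->
  Rabs (proj01 (/2 + y + clamp (eta - d) (/2 - (/2 + y)) + bb) - /2)
  <= Rmax d (D - (eta - 2 * d)).
Proof. intros. unfold clamp. rsolve. Qed.

Lemma step_spread f0 f1 b0 b1 d eta eps :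
  0 < eps < eta -> 0 <= d -> 3 * d <= eps ->
  Rabs (f0 - /2) <= d -> Rabs (f1 - /2) <= d -> Rabs b0 <= d -> Rabs b1 <= d ->
  Rmin (2 * eta - 2 * eps) 1 <=
  Rabs (proj01 (f0 + (eta - d) + b0) - proj01 (f1 + - (eta - d) + b1)).
Proof. intros. rsolve. Qed.

Lemma sumR_bd l x a b : (forall j, In j l -> a <= x j <= b) ->
  INR (length l) * a <= sumR l x <= INR (length l) * b.
Proof.
  induction l as [|j l IH]; intros H.
  - simpl; lra.
  - assert (Hj := H j (or_introl eq_refl)).
    assert (IH' := IH (fun k Hk => H k (or_intror Hk))).
    change (length (j :: l)) with (S (length l)); rewrite S_INR.
    change (sumR (j :: l) x) with (x j + sumR l x). lra.
Qed.

Lemma avg_bd l x a b : (0 < length l)%nat -> (forall j, In j l -> a <= x j <= b) ->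
  a <= sumR l x / INR (length l) <= b.
Proof.
  intros Hl H. assert (HL : 0 < INR (length l)) by (apply lt_0_INR; lia).
  destruct (sumR_bd l x a b H).
  split.
  - apply Rmult_le_reg_r with (INR (length l)); auto.
    unfold Rdiv; rewrite Rmult_assoc, Rinv_l by lra. lra.
  - apply Rmult_le_reg_r with (INR (length l)); auto.
    unfold Rdiv; rewrite Rmult_assoc, Rinv_l by lra. lra.
Qed.

Lemma nbrs_in n r x i : (i < n)%nat -> 0 <= r i -> In i (nbrs n r x i).
Proof.
  intros. unfold nbrs. apply filter_In. split.
  - apply in_seq; lia.
  - destruct Rle_dec as [|C]; auto. exfalso; apply C.
    rewrite Rminus_diag, Rabs_R0; auto.
Qed.

Lemma nbrs_lt n r x i j : In j (nbrs n r x i) -> (j < n)%nat.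
Proof. unfold nbrs; intros H. apply filter_In in H. destruct H as [H _].
  apply in_seq in H; lia. Qed.

Lemma nbr_avg_bd n r x i a b : (i < n)%nat -> 0 <= r i ->
  (forall j, (j < n)%nat -> a <= x j <= b) -> a <= nbr_avg n r x i <= b.
Proof.
  intros Hi Hr H. unfold nbr_avg. apply avg_bd.
  - destruct (nbrs n r x i) eqn:E; simpl; [|lia].
    pose proof (nbrs_in n r x i Hi Hr) as HH; rewrite E in HH; destruct HH.
  - intros j Hj; apply H; eapply nbrs_lt; eauto.
Qed.

Lemma C3_bd n r omega x i a b : (i < n)%nat -> 0 <= r i -> 0 < omega i < 1 ->
  (forall j, (j < n)%nat -> a <= x j <= b) -> a <= proto_C3 n r omega x i <= b.
Proof.
  intros Hi Hr Ho H. unfold proto_C3.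
  pose proof (nbr_avg_bd n r x i a b Hi Hr H) as H1. unfold nbr_avg in H1.
  assert (H2 : a <= x_ave n x <= b).
  { unfold x_ave. pose proof (length_seq n 0) as EL.
    pose proof (avg_bd (seq 0 n) x a b) as AB; rewrite EL in AB. apply AB. lia.
    intros j Hj; apply H; apply in_seq in Hj; lia. }
  assert (HL : 0 < INR (length (nbrs n r x i))).
  { apply lt_0_INR. pose proof (nbrs_in n r x i Hi Hr) as HH.
    destruct (nbrs n r x i); simpl in *; [destruct HH| lia]. }
  replace ((1 - omega i) / INR (length (nbrs n r x i)) * sumR (nbrs n r x i) x)
    with ((1 - omega i) * (sumR (nbrs n r x i) x / INR (length (nbrs n r x i)))) by (field; lra).
  set (A := x_ave n x) in *. set (B := sumR (nbrs n r x i) x / INR (length (nbrs n r x i))) in *.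
  nra.
Qed.

Lemma fold_max_ge a l : In a l -> a <= fold_right Rmax 0 l.
Proof.
  induction l as [|c l IH]; simpl; [tauto|]. intros [->|H].
  - apply Rmax_l.
  - eapply Rle_trans; [apply IH; auto| apply Rmax_r].
Qed.

Lemma max_diff_ge n x i j : (i < n)%nat -> (j < n)%nat -> Rabs (x i - x j) <= max_diff n x.
Proof.
  intros. unfold max_diff. apply fold_max_ge. apply in_flat_map.
  exists i. split. apply in_seq; lia. apply in_map_iff. exists j. split; auto. apply in_seq; lia.
Qed.

Lemma length_hist f u b x0 k : length (hist f u b x0 k) = S k.
Proof. induction k; simpl; auto. Qed.

Lemma hd_hist f u b x0 k d : hd d (hist f u b x0 k) = traj f u b x0 k.
Proof. unfold traj; destruct k; reflexivity. Qed.

Lemma traj_S f u b x0 k : traj f u b x0 (S k) =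
  fun i => proj01 (f (traj f u b x0 k) i + u (hist f u b x0 k) i + b k i).
Proof. unfold traj at 1. simpl. rewrite hd_hist. reflexivity. Qed.

Definition upol (f : state -> nat -> R) (K : nat) (eta d : R) (h : list state) (i : nat) : R :=
  if (length h <=? K)%nat then clamp (eta - d) (/2 - f (hd (fun _ => 0) h) i)
  else if (i =? 0)%nat then eta - d
  else if (i =? 1)%nat then - (eta - d) else 0.

Lemma generic n eta eps f :
  (2 <= n)%nat -> 0 < eps < eta ->
  (forall x a b i, (i < n)%nat -> (forall j, (j < n)%nat -> a <= x j <= b) -> a <= f x i <= b) ->
  robustly_reachable n eta f (E_c n (Rmin (2 * eta - 2 * eps) 1)).
Proof.
  intros Hn He Hf.
  set (d := eps / 3). set (s := eta - 2 * d).
  assert (Hs : s > 0) by (unfold s, d; lra).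
  destruct (INR_archimed s (/2) Hs) as [K HK].
  exists (S K), d. split; [lia|]. split; [unfold d; lra|].
  intros x0 Hx0. right.
  exists (fun _ _ => d), (upol f K eta d). split.
  { intros h i. split; [unfold d; lra|].
    unfold upol. destruct (length h <=? K)%nat.
    - apply clamp_bd; unfold d; lra.
    - unfold d; destruct (i =? 0)%nat; [lra|]. destruct (i =? 1)%nat; lra. }
  intros b Hb. exists (S K). split; [lia|].
  assert (Inv : forall k, (k <= K)%nat -> forall i, (i < n)%nat ->
     Rabs (traj f (upol f K eta d) b x0 k i - /2) <= Rmax d (/2 - INR k * s)).
  { induction k as [|k IH]; intros Hk i Hi.
    - unfold traj; simpl. specialize (Hx0 i Hi).
      eapply Rle_trans; [|apply Rmax_r]. split_Rabs; lra.
    - rewrite traj_S.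
      set (D := Rmax d (/2 - INR k * s)).
      assert (HfD : Rabs (f (traj f (upol f K eta d) b x0 k) i - /2) <= D).
      { assert (HH : /2 - D <= f (traj f (upol f K eta d) b x0 k) i <= /2 + D).
        { apply Hf; auto. intros j Hj. specialize (IH ltac:(lia) j Hj).
          fold D in IH. split_Rabs; lra. }
        split_Rabs; lra. }
      assert (Eu : upol f K eta d (hist f (upol f K eta d) b x0 k) i =
        clamp (eta - d) (/2 - f (traj f (upol f K eta d) b x0 k) i)).
      { unfold upol at 1. rewrite length_hist.
        replace (S k <=? K)%nat with true by (symmetry; apply Nat.leb_le; lia).
        rewrite hd_hist. reflexivity. }
      rewrite Eu.
      set (y := f (traj f (upol f K eta d) b x0 k) i - /2) in *.
      replace (f (traj f (upol f K eta d) b x0 k) i) with (/2 + y) by (unfold y; ring).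
      assert (Hbk : Rabs (b k i) <= d) by (apply Hb; auto; lia).
      eapply Rle_trans.
      + apply (step_center y D (b k i) d eta); auto; unfold d; lra.
      + rewrite S_INR. unfold D, s, d, Rmax. repeat destruct Rle_dec; lra. }
  assert (InvK : forall i, (i < n)%nat ->
     Rabs (f (traj f (upol f K eta d) b x0 K) i - /2) <= d).
  { intros i Hi.
    assert (HH : /2 - d <= f (traj f (upol f K eta d) b x0 K) i <= /2 + d).
    { apply Hf; auto. intros j Hj. specialize (Inv K (le_n K) j Hj).
      rewrite Rmax_left in Inv by (unfold d in *; lra). split_Rabs; lra. }
    split_Rabs; lra. }
  split.
  - intros i Hi. rewrite traj_S. apply proj01_bd.
  - apply Rle_ge. eapply Rle_trans; [|apply (max_diff_ge n _ 0 1); lia].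
    rewrite traj_S.
    assert (Eu : forall i, upol f K eta d (hist f (upol f K eta d) b x0 K) i =
        if (i =? 0)%nat then eta - d
        else if (i =? 1)%nat then - (eta - d) else 0).
    { intros i. unfold upol at 1. rewrite length_hist.
      replace (S K <=? K)%nat with false by (symmetry; apply Nat.leb_gt; lia). reflexivity. }
    rewrite !Eu. simpl.
    apply step_spread; auto; try (unfold d; lra).
    all: first [apply InvK; lia | apply Hb; lia].
Qed.

Theorem lemma4 (n : nat) (r omega : nat -> R) (eta eps : R) :
  (3 <= n)%nat ->
  (forall i, (i < n)%nat -> 0 < r i <= 1) ->
  (forall i, (i < n)%nat -> 0 < omega i < 1) ->
  0 < eta ->
  0 < eps < eta ->
  robustly_reachable n eta (proto_C1 n r) (E_c n (Rmin (2 * eta - 2 * eps) 1)) /\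
  robustly_reachable n eta (proto_C3 n r omega) (E_c n (Rmin (2 * eta - 2 * eps) 1)).
Proof.
  intros Hn Hr Ho He Heps. split; apply generic; auto; try lia.
  - intros x a b i Hi H. unfold proto_C1. apply nbr_avg_bd; auto.
    specialize (Hr i Hi); lra.
  - intros x a b i Hi H. apply C3_bd; auto. specialize (Hr i Hi); lra.
Qed.
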